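(* Let $p,n\in\mathbb N$ with $p\ge n\ge 10$, and let $G\in \mathrm{Ex}(p;T_n^3)$. If $G$ is connected, then $\Delta(G)\in\{n-5,n-4\}$.
   Context: All graphs are finite simple graphs; $\Delta(G)$ is the maximum degree of $G$. For a graph $L$, $\mathrm{ex}(p;L)$ is the maximum number of edges in a graph on $p$ vertices containing no subgraph isomorphic to $L$, and $\mathrm{Ex}(p;L)$ is the set of graphs on $p$ vertices containing no copy of $L$ and having exactly $\mathrm{ex}(p;L)$ edges. For $n\ge 6$, $T_n^3$ is the tree on vertex set $\{v_0,\ldots,v_{n-1}\}$ with edge set $\{v_0v_1,\ldots,v_0v_{n-4},\ v_1v_{n-3},\ v_1v_{n-2},\ v_1v_{n-1}\}$. *)

(* Defs.v *)
From mathcomp Require Import all_boot.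
Set Implicit Arguments. Unset Strict Implicit. Unset Printing Implicit Defensive.

Definition simple_graph (p : nat) (e : rel 'I_p) : Prop :=
  symmetric e /\ irreflexive e.

Definition nedges (p : nat) (e : rel 'I_p) : nat :=
  #|[set xy : 'I_p * 'I_p | e xy.1 xy.2 && (xy.1 < xy.2)]|.

Definition degree (p : nat) (e : rel 'I_p) (x : 'I_p) : nat :=
  #|[set y | e x y]|.

Definition maxdeg (p : nat) (e : rel 'I_p) : nat :=
  \max_(x : 'I_p) degree e x.

Definition connected_graph (p : nat) (e : rel 'I_p) : Prop :=
  forall x y : 'I_p, connect e x y.

Definition contains_copy (m p : nat) (l : rel 'I_m) (e : rel 'I_p) : Prop :=
  exists f : 'I_m -> 'I_p, injective f /\ forall i j, l i j -> e (f i) (f j).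

(* The tree T_n^3 on vertices v_0..v_{n-1}:
   edges v0 v_i (1 <= i <= n-4) and v1 v_{n-3}, v1 v_{n-2}, v1 v_{n-1}. *)
Definition T3_half (n : nat) (i j : 'I_n) : bool :=
  ((i == 0 :> nat) && (1 <= j <= n - 4)) ||
  ((i == 1 :> nat) && (n - 3 <= j <= n - 1)).

Definition T3 (n : nat) : rel 'I_n := fun i j => T3_half i j || T3_half j i.

Definition in_Ex (m p : nat) (l : rel 'I_m) (e : rel 'I_p) : Prop :=
  simple_graph e /\ ~ contains_copy l e /\
  forall h : rel 'I_p, simple_graph h -> ~ contains_copy l h ->
    nedges h <= nedges e.

Arguments T3 : clear implicits.

(* Main.v *)
Require Import Defs.
From mathcomp Require Import all_boot.
From mathcomp Require Import zify.
Set Implicit Arguments. Unset Strict Implicit. Unset Printing Implicit Defensive.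

Definition W p (r : rel 'I_p) : nat := \sum_(x : 'I_p) \sum_(y : 'I_p) nat_of_bool (r x y).

Lemma sum_card (T : finType) (P : pred T) :
  \sum_(y : T) nat_of_bool (P y) = #|[set y | P y]|.
Proof.
rewrite -sum1_card [RHS]big_mkcond /=; apply: eq_bigr => y _; by rewrite inE; case: (P y).
Qed.

Lemma nedges2 p (r : rel 'I_p) : symmetric r -> irreflexive r -> (nedges r).*2 = W r.
Proof.
move=> rs ri.
have E : W r = \sum_(x : 'I_p) \sum_(y : 'I_p) (nat_of_bool (r x y && (x < y)) + nat_of_bool (r y x && (y < x))).
  apply: eq_bigr => x _; apply: eq_bigr => y _.
  have [->|xy] := eqVneq x y; first by rewrite ri.
  rewrite (rs y x).
  have : (x < y) || (y < x) by rewrite -neq_ltn.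
  by case: (r x y); case/orP=> H; rewrite H //=; [rewrite ltnNge ltnW | rewrite ltnNge ltnW].
rewrite E. under eq_bigr => x _ do rewrite big_split /=.
rewrite big_split /= [X in _ + X]exchange_big /= -addnn; congr (_ + _);
  rewrite /nedges pair_big /= -sum_card; by apply: eq_bigr => -[x y] _.
Qed.

Lemma nedges_lt p (r1 r2 : rel 'I_p) : simple_graph r1 -> simple_graph r2 ->
  W r1 < W r2 -> nedges r1 < nedges r2.
Proof.
move=> [s1 i1] [s2 i2]; rewrite -(nedges2 s1 i1) -(nedges2 s2 i2); by rewrite ltn_double.
Qed.


Lemma cardU_le (T : finType) (A B : {set T}) : #|A :|: B| <= #|A| + #|B|.
Proof. rewrite cardsU; exact: leq_subr. Qed.

Lemma card3_le (T : finType) (a b c : T) : #|[set a; b; c]| <= 3.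
Proof.
apply: (leq_trans (cardU_le _ _)); rewrite cards1.
apply: (@leq_trans (2 + 1)) => //; rewrite leq_add2r.
apply: (leq_trans (cardU_le _ _)); by rewrite !cards1.
Qed.

Lemma card2_le (T : finType) (a b : T) : #|[set a; b]| <= 2.
Proof. apply: (leq_trans (cardU_le _ _)); by rewrite !cards1. Qed.

Lemma card_setD_ge (T : finType) (A B : {set T}) : #|A| - #|B| <= #|A :\: B|.
Proof. rewrite cardsD; apply: leq_sub2l; apply: subset_leq_card; apply: subsetIr. Qed.

Lemma sum_le (T : finType) (S : {set T}) (F : T -> nat) c :
  (forall x, x \in S -> F x <= c) -> \sum_(x in S) F x <= #|S| * c.
Proof. move=> H; rewrite -sum_nat_const; exact: leq_sum. Qed.

Lemma sum_lt (T : finType) (S : {set T}) (F : T -> nat) a c : a \in S ->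
  (forall x, x \in S -> F x <= c) -> F a < c -> \sum_(x in S) F x < #|S| * c.
Proof.
move=> aS H Ha; rewrite -sum_nat_const (bigD1 a) //= [X in _ < X](bigD1 a) //=.
rewrite -addSn leq_add //; apply: leq_sum => x /andP[xS _]; exact: H.
Qed.

Lemma conn_cut p (e : rel 'I_p) (S : {set 'I_p}) x z :
  connect e x z -> x \in S -> z \notin S -> exists a b, [/\ a \in S, b \notin S & e a b].
Proof.
case/connectP => s; elim: s x => [|y s IH] x /=.
  by move=> _ -> ->.
move=> /andP[exy ps] zl xS zS; case yS: (y \in S).
  exact: IH ps zl yS zS.
by exists x, y; rewrite yS.
Qed.

Lemma exists_out p (S : {set 'I_p}) : #|S| < p -> exists z, z \notin S.
Proof.
move=> Sp; case: (pickP [pred z | z \notin S]) => [z Hz|H]; first by exists z.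
have : [set: 'I_p] \subset S by apply/subsetP => z _; have := H z; rewrite /= => /negbFE.
move/subset_leq_card; rewrite cardsT card_ord; clear -Sp; lia.
Qed.

Lemma deg_le_max p (e : rel 'I_p) x : degree e x <= maxdeg e.
Proof. rewrite /maxdeg; exact: (@leq_bigmax _ (fun x => degree e x) x). Qed.

Lemma max_attained p (e : rel 'I_p) : 0 < p -> exists v, degree e v = maxdeg e.
Proof.
move=> p0; have [v Hv] := @eq_bigmax _ (fun x => degree e x) (ltac:(by rewrite card_ord)).
by exists v; rewrite /maxdeg Hv.
Qed.

Lemma outS_le p (e : rel 'I_p) (S : {set 'I_p}) x :
  #|[set y | e x y & y \notin S]| <= degree e x.
Proof. apply: subset_leq_card; apply/subsetP => y; rewrite !inE => /andP[]. done. Qed.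


Lemma copy_lemma p n (e : rel 'I_p) (v u w1 w2 w3 : 'I_p) :
  10 <= n -> symmetric e -> irreflexive e ->
  e v u -> e u w1 -> e u w2 -> e u w3 ->
  w1 != v -> w2 != v -> w3 != v -> w1 != w2 -> w1 != w3 -> w2 != w3 ->
  n - 5 <= #|[set x | e v x] :\: [set u; w1; w2; w3]| ->
  contains_copy (T3 n) e.
Proof.
move=> n10 esym eirr evu euw1 euw2 euw3 w1v w2v w3v w12 w13 w23 /card_geqP[s [us ss subs]].
have uv : u != v by apply/eqP=> E; move: evu; rewrite E eirr.
have w1u : w1 != u by apply/eqP=> E; move: euw1; rewrite E eirr.
have w2u : w2 != u by apply/eqP=> E; move: euw2; rewrite E eirr.
have w3u : w3 != u by apply/eqP=> E; move: euw3; rewrite E eirr.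
have w21 : w2 != w1 by rewrite eq_sym.
have w31 : w3 != w1 by rewrite eq_sym.
have w32 : w3 != w2 by rewrite eq_sym.
have sP : forall x, x \in s -> e v x /\ [/\ x != v, x != u, x != w1, x != w2 & x != w3].
  move=> x /subs; rewrite !inE !negb_or -!andbA => /and5P[a b c d ex].
  split=> //; split=> //; apply/eqP=> E; by move: ex; rewrite E eirr.
pose f (i : 'I_n) : 'I_p := let k := val i in
  if k == 0 then v else if k == 1 then u else if k == n-3 then w1
  else if k == n-2 then w2 else if k == n-1 then w3 else nth v s (k-2).
pose g (x : 'I_p) : nat := if x == v then 0 else if x == u then 1 else if x == w1 then n-3
  else if x == w2 then n-2 else if x == w3 then n-1 else index x s + 2.
have mid : forall k, k < n -> k != 0 -> k != 1 -> k != n-3 -> k != n-2 -> k != n-1 ->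
   nth v s (k-2) \in s.
  move=> k kn k0 k1 k3 k4 k5; apply: mem_nth; rewrite ss; clear -kn k3 k4 k5 n10; lia.
have gf : forall i, g (f i) = val i.
  move=> [k kn] /=; rewrite /f /g /=.
  have [->|k0] := eqVneq k 0; first by rewrite eqxx.
  have [->|k1] := eqVneq k 1; first by rewrite (negbTE uv) eqxx.
  have [->|k3] := eqVneq k (n-3); first by rewrite (negbTE w1v) (negbTE w1u) eqxx.
  have [->|k4] := eqVneq k (n-2); first by rewrite (negbTE w2v) (negbTE w2u) (negbTE w21) eqxx.
  have [->|k5] := eqVneq k (n-1).
    by rewrite (negbTE w3v) (negbTE w3u) (negbTE w31) (negbTE w32) eqxx.
  have := sP _ (mid k kn k0 k1 k3 k4 k5) => -[_ [/negbTE -> /negbTE -> /negbTE -> /negbTE -> /negbTE ->]].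
  rewrite index_uniq //; first by clear -k0 k1; lia. rewrite ss; clear -kn k3 k4 k5 n10; lia.
exists f; split.
  move=> i j E; apply: val_inj; by rewrite -gf E gf.
have half : forall i j, T3_half i j -> e (f i) (f j).
  move=> [i ilt] [j jlt]; rewrite /T3_half /f /=.
  case/orP=> /andP[/eqP -> /andP[j1 j2]] /=.
    have [->|j1'] := eqVneq j 1; first by [].
    have a0 : (j == 0) = false by apply/eqP; clear -j1; lia.
    have a3 : (j == n-3) = false by apply/eqP; clear -j2 n10; lia.
    have a4 : (j == n-2) = false by apply/eqP; clear -j2 n10; lia.
    have a5 : (j == n-1) = false by apply/eqP; clear -j2 n10; lia.
    rewrite a0 a3 a4 a5.
    have := sP _ (mid j jlt (negbT a0) j1' (negbT a3) (negbT a4) (negbT a5)).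
    by case.
  have -> : (j == 0) = false by apply/eqP; clear -j1 n10; lia.
  have -> : (j == 1) = false by apply/eqP; clear -j1 n10; lia.
  have [_|j3] := eqVneq j (n-3); first by [].
  have [_|j4] := eqVneq j (n-2); first by [].
  have [_|j5] := eqVneq j (n-1); first by [].
  clear -j1 j2 j3 j4 j5 jlt; lia.
move=> i j; rewrite /T3 => /orP[/half //|/half]; by rewrite esym.
Qed.


Definition outS p (e : rel 'I_p) (S : {set 'I_p}) x := #|[set y | e x y & y \notin S]|.

Lemma T3_conn n (i0 i1 i : 'I_n) : 10 <= n -> val i0 = 0 -> val i1 = 1 ->
  i = i0 \/ T3 n i0 i \/ (T3 n i0 i1 /\ T3 n i1 i).
Proof.
move=> n10 h0 h1.
case: i => k kn.
have [k0'|k0] := eqVneq k 0; first by left; apply: val_inj; rewrite /= k0' h0.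
right; rewrite /T3 /T3_half h0 h1 /=.
have [k1|k1] := leqP k (n-4).
  left; apply/orP; left; apply/orP; left; apply/andP; split=> //; clear -k0; lia.
right; split.
  clear -n10; lia.
clear -k1 kn; lia.
Qed.

Lemma exchange p n (e : rel 'I_p) (S : {set 'I_p}) :
  10 <= n -> in_Ex (T3 n) e -> #|S| <= n - 1 ->
  \sum_(x in S) (degree e x + outS e S x) < #|S| * (#|S| - 1) -> False.
Proof.
move=> n10 [[es ei] [nc mx]] Sn Hsum.
pose h : rel 'I_p := fun x y =>
  if (x \in S) || (y \in S) then [&& x \in S, y \in S & x != y] else e x y.
have hs : simple_graph h.
  split.
  - move=> x y; rewrite /h; case: (x \in S); case: (y \in S) => //=.
      by rewrite eq_sym.
  - move=> x; rewrite /h orbb; case: (x \in S) => //=; first by rewrite eqxx.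
have hfree : ~ contains_copy (T3 n) h.
  move=> [f [finj fT]].
  have hS : forall x y, h x y -> (x \in S) = (y \in S).
    by move=> x y; rewrite /h; case: (x \in S); case: (y \in S).
  have n0 : 0 < n by clear -n10; lia.
  have n1 : 1 < n by clear -n10; lia.
  pose i0 := Ordinal n0; pose i1 := Ordinal n1.
  have allS : forall i, (f i \in S) = (f i0 \in S).
    move=> i; case: (@T3_conn n i0 i1 i n10 erefl erefl) => [->//|[/fT/hS->//|[/fT/hS h01 /fT/hS h1i]]].
    by rewrite h01 h1i.
  case E: (f i0 \in S).
  - have : n <= #|S|.
      have <- : #|[set f i | i in 'I_n]| = n by rewrite card_imset // card_ord.
      apply: subset_leq_card; apply/subsetP => x /imsetP[i _ ->]; by rewrite allS E.
    clear -Sn n10; lia.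
  - apply: nc; exists f; split=> // i j Tij.
    have := fT i j Tij; by rewrite /h allS (allS j) E /=.
have := mx h hs hfree.
pose C := \sum_(x : 'I_p) \sum_(y : 'I_p) nat_of_bool [&& x \notin S, y \notin S & e x y].
have We : W e = C + \sum_(x in S) (degree e x + outS e S x).
  rewrite /W.
  transitivity (C + (\sum_(x : 'I_p) \sum_(y : 'I_p) nat_of_bool ((x \in S) && e x y)
     + \sum_(x : 'I_p) \sum_(y : 'I_p) nat_of_bool [&& x \notin S, y \in S & e x y])).
    rewrite /C -!big_split; apply: eq_bigr => x _; rewrite -!big_split; apply: eq_bigr => y _ /=.
    by case: (x \in S); case: (y \in S); case: (e x y).
  congr (_ + _).
  rewrite [RHS]big_split /= [X in _ + X = _]exchange_big /=; congr (_ + _).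
    rewrite [RHS]big_mkcond; apply: eq_bigr => x _.
    case: (x \in S) => /=; first by rewrite sum_card.
    by rewrite big1.
  rewrite [RHS]big_mkcond; apply: eq_bigr => y _.
  case yS: (y \in S) => /=.
    rewrite sum_card /outS; apply: eq_card => x; by rewrite !inE (es x y) andbC.
  by rewrite big1 // => x _; rewrite andbF.
have Wh : W h = C + #|S| * (#|S| - 1).
  rewrite /W.
  transitivity (\sum_(x : 'I_p) \sum_(y : 'I_p) (nat_of_bool [&& x \notin S, y \notin S & e x y]
     + nat_of_bool [&& x \in S, y \in S & x != y])).
    apply: eq_bigr => x _; apply: eq_bigr => y _.
    by rewrite /h; case: (x \in S); case: (y \in S); case: (e x y).
  under eq_bigr => x _ do rewrite big_split /=.
  rewrite big_split /=; congr (_ + _).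
  rewrite -sum_nat_const [RHS]big_mkcond; apply: eq_bigr => x _.
  case xS: (x \in S) => /=; last by rewrite big1.
  rewrite sum_card (cardsD1 x S) xS add1n subn1 /=; apply: eq_card => y.
  by rewrite !inE andbC eq_sym.
have : nedges e < nedges h.
  apply: nedges_lt => //; rewrite We Wh ltn_add2l //.
move=> A B; clear -A B; lia.
Qed.


Lemma W_mono_lt p (r1 r2 : rel 'I_p) a b :
  (forall x y, r1 x y -> r2 x y) -> r2 a b -> ~~ r1 a b -> W r1 < W r2.
Proof.
move=> H r2ab r1ab; rewrite /W (bigD1 a) //= [X in _ < X](bigD1 a) //= -addSn.
have le : forall x y, nat_of_bool (r1 x y) <= nat_of_bool (r2 x y).
  by move=> x y; case E: (r1 x y); rewrite // (H _ _ E).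
apply: leq_add; last by apply: leq_sum => x _; apply: leq_sum => y _; exact: le.
rewrite (bigD1 b) //= [X in _ < X](bigD1 b) //= -addSn (negbTE r1ab) r2ab.
apply: leq_add => //; apply: leq_sum => y _; exact: le.
Qed.

Lemma copy_deg p n (r : rel 'I_p) (f : 'I_n -> 'I_p) (i0 : 'I_n) : 10 <= n ->
  injective f -> (forall i j, T3 n i j -> r (f i) (f j)) -> val i0 = 0 ->
  n - 4 <= degree r (f i0).
Proof.
move=> n10 finj fT h0.
have ltj : forall j : 'I_(n-4), j.+1 < n by move=> [j jl] /=; clear -jl n10; lia.
pose g (j : 'I_(n-4)) : 'I_n := Ordinal (ltj j).
have ginj : injective g by move=> j1 j2 /(congr1 val) /= [] /val_inj.
have <- : #|[set f (g j) | j : 'I_(n-4)]| = n - 4.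
  by rewrite card_imset ?card_ord //; move=> j1 j2 /finj /ginj.
apply: subset_leq_card; apply/subsetP => x /imsetP[j _ ->]; rewrite inE.
apply: fT; rewrite /T3 /T3_half h0 /=; apply/orP; left; apply/orP; left.
case: j => j jl /=; clear -jl n10; lia.
Qed.

Lemma lower p n (e : rel 'I_p) : 10 <= n -> n <= p -> in_Ex (T3 n) e -> n - 5 <= maxdeg e.
Proof.
move=> n10 np [[es ei] [nc mx]]; rewrite leqNgt; apply/negP => Hlt.
have degle : forall x, degree e x <= n - 6.
  move=> x; have := deg_le_max e x; clear -Hlt; lia.
have p0 : 0 < p by clear -n10 np; lia.
pose a := Ordinal p0.
have [b bN] : exists b, b \notin a |: [set y | e a y].
  apply: exists_out; apply: (leq_ltn_trans (cardU_le _ _)); rewrite cards1.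
  have := degle a; rewrite /degree => H; apply: (leq_ltn_trans (leq_add (leqnn 1) H)); clear -n10 np; lia.
move: bN; rewrite !inE negb_or => /andP[ba eab].
have ab : a != b by rewrite eq_sym.
pose h : rel 'I_p := fun x y => e x y || ((x == a) && (y == b)) || ((x == b) && (y == a)).
have hs : simple_graph h.
  split.
  - move=> x y; rewrite /h (es x y); case: (e y x) => //=.
    by rewrite orbC andbC [(y == b) && _]andbC.
  - move=> x; rewrite /h ei /=; case: eqP => [->|]; last by rewrite andbF.
    by rewrite (negbTE ab).
have hdeg : forall x, degree h x <= n - 5.
  move=> x; rewrite /degree.
  have [->|xa] := eqVneq x a.
    apply: (@leq_trans #|b |: [set y | e a y]|).
      apply: subset_leq_card; apply/subsetP => y; rewrite !inE /h eqxx (negbTE ab) /= orbF.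
      by case/orP => ->; rewrite ?orbT.
    rewrite cardsU1; have := degle a; rewrite /degree => H; apply: (leq_trans (leq_add (leq_b1 _) H)); clear -n10; lia.
  have [->|xb] := eqVneq x b.
    apply: (@leq_trans #|a |: [set y | e b y]|).
      apply: subset_leq_card; apply/subsetP => y; rewrite !inE /h eqxx (negbTE ba) /=.
      by rewrite orbF orbC.
    rewrite cardsU1; have := degle b; rewrite /degree => H; apply: (leq_trans (leq_add (leq_b1 _) H)); clear -n10; lia.
  apply: (@leq_trans #|[set y | e x y]|).
    apply: subset_leq_card; apply/subsetP => y; rewrite !inE /h (negbTE xa) (negbTE xb) /=.
    by rewrite !orbF.
  have := degle x; rewrite /degree => H; apply: (leq_trans H); clear; lia.
have hfree : ~ contains_copy (T3 n) h.
  move=> [f [finj fT]].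
  have n0 : 0 < n by clear -n10; lia.
  have := @copy_deg p n h f (Ordinal n0) n10 finj fT erefl.
  have := hdeg (f (Ordinal n0)); clear -n10; lia.
have := mx h hs hfree.
have : nedges e < nedges h.
  apply: nedges_lt => //; apply: (@W_mono_lt _ e h a b) => //.
    by move=> x y exy; rewrite /h exy.
  by rewrite /h !eqxx orbT.
move=> A B; clear -A B; lia.
Qed.


Lemma card4_le (T : finType) (a b c d : T) : #|[set a; b; c; d]| <= 4.
Proof.
apply: (leq_trans (cardU_le _ _)); rewrite cards1.
apply: (@leq_trans (3 + 1)) => //; rewrite leq_add2r; exact: card3_le.
Qed.

Lemma degD1 p (e : rel 'I_p) u v : symmetric e -> e v u ->
  degree e u = (#|[set y | e u y] :\ v|).+1.
Proof.
move=> es evu; rewrite /degree (cardsD1 v) inE (es u v) evu.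
by [].
Qed.

Lemma caseA p n (e : rel 'I_p) v : 10 <= n -> in_Ex (T3 n) e ->
  n - 1 <= degree e v -> False.
Proof.
move=> n10 Ex dv; have Ex' := Ex; case: Ex' => [[es ei] [nc _]].
have nb3 : forall u, e v u -> degree e u <= 3.
  move=> u evu; rewrite leqNgt; apply/negP => d4.
  have : 2 < #|[set y | e u y] :\ v| by move: d4; rewrite (degD1 es evu).
  case/card_gt2P => w1 [w2 [w3 [[h1 h2 h3] [d12 d23 d31]]]].
  move: h1 h2 h3; rewrite !inE => /andP[w1v euw1] /andP[w2v euw2] /andP[w3v euw3].
  apply: nc; apply: (copy_lemma n10 es ei evu euw1 euw2 euw3) => //; first by rewrite eq_sym.
  apply: leq_trans (card_setD_ge _ _).
  have := card4_le u w1 w2 w3; move: dv; rewrite /degree => A B.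
  apply: (leq_trans _ (leq_sub2l _ B)); clear -A n10; lia.
have : n - 2 <= #|[set y | e v y]| by move: dv; rewrite /degree; clear; lia.
case/card_geqP => s [us ss subs].
have cS : #|[set x in s]| = n - 2 by rewrite cardsE (card_uniqP us).
apply: (@exchange p n e [set x in s] n10 Ex); first by rewrite cS; clear; lia.
apply: (leq_ltn_trans (@sum_le _ _ _ 6 _)).
  move=> x; rewrite inE => /subs; rewrite inE => /nb3 d3.
  have := outS_le e [set x in s] x; rewrite /outS => o; clear -d3 o; lia.
rewrite cS ltn_mul2l; clear -n10; lia.
Qed.

Lemma out_cases p (e : rel 'I_p) (S : {set 'I_p}) x :
  outS e S x = 0 \/ exists w, e x w /\ w \notin S.
Proof.
rewrite /outS; case: (boolP ([set y | e x y & y \notin S] == set0)) => [/eqP ->|/set0Pn [w]].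
  by rewrite cards0; left.
by rewrite inE => /andP[??]; right; exists w.
Qed.

Lemma caseB p n (e : rel 'I_p) v : 10 <= n -> n <= p -> in_Ex (T3 n) e ->
  connected_graph e -> (forall x, degree e x <= n - 2) -> degree e v = n - 2 -> False.
Proof.
move=> n10 np Ex conn dmax dv; have Ex' := Ex; case: Ex' => [[es ei] [nc _]].
pose S := v |: [set y | e v y].
have vN : v \notin [set y | e v y] by rewrite inE ei.
have cS : #|S| = n - 1 by rewrite /S cardsU1 vN -/(degree e v) dv; clear -n10; lia.
have inS : forall y, e v y -> y \in S by move=> y evy; rewrite !inE evy orbT.
have nb3 : forall u w, e v u -> e u w -> w \notin S -> degree e u <= 3.
  move=> u w evu euw wS; rewrite leqNgt; apply/negP => d4.
  have wv : w != v by apply/eqP => E; move: wS; rewrite E !inE eqxx.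
  have wA : w \in [set y | e u y] :\ v by rewrite !inE wv euw.
  have : 1 < #|([set y | e u y] :\ v) :\ w|.
    move: d4; rewrite (degD1 es evu) (cardsD1 w) wA; clear; lia.
  case/card_gt1P => w2 [w3 [h2 h3 d23]].
  move: h2 h3; rewrite !inE => /and3P[w2w w2v euw2] /and3P[w3w w3v euw3].
  have wNv : ~~ e v w by apply: contra wS => /inS.
  apply: nc; apply: (copy_lemma n10 es ei evu euw euw2 euw3) => //;
    try by rewrite eq_sym.
  apply: (@leq_trans #|[set y | e v y] :\: [set u; w2; w3]|).
    apply: leq_trans (card_setD_ge _ _).
    have := card3_le u w2 w3; move: dv; rewrite /degree => A B.
    apply: (leq_trans _ (leq_sub2l _ B)); rewrite A; clear -n10; lia.
  apply: subset_leq_card; apply/subsetP => x; rewrite !inE.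
  case/andP => H evx; rewrite evx andbT; move: H; apply: contra.
  case/orP => [/orP[/orP[->|/eqP xw]|->]|->]; rewrite ?orbT //.
  by move: wNv; rewrite -xw evx.
have [z zS] : exists z, z \notin S by apply: exists_out; rewrite cS; clear -n10 np; lia.
have vS : v \in S by rewrite /S !inE eqxx.
have [a [b [aS bS eab]]] := conn_cut (conn v z) vS zS.
have eva : e v a.
  move: aS; rewrite !inE => /orP[/eqP av|//].
  by move: eab; rewrite av => /inS; rewrite (negbTE bS).
have da := nb3 a b eva eab bS.
apply: (@exchange p n e S n10 Ex); first by rewrite cS.
suff key : \sum_(x in S) (degree e x + outS e S x) < #|S| * (n - 2).
  by rewrite cS in key *; have -> : n - 1 - 1 = n - 2 by clear; lia.
apply: (@sum_lt _ S (fun x => degree e x + outS e S x) a (n - 2)) => //.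
- move=> x; rewrite !inE => /orP[/eqP ->|evx].
    have -> : outS e S v = 0.
      rewrite /outS; apply/eqP; rewrite cards_eq0; apply/eqP/setP => y; rewrite !inE.
      by case: (e v y); rewrite ?orbT.
    by rewrite dv addn0.
  case: (out_cases e S x) => [->|[w [exw wS]]]; first by rewrite addn0.
  have := nb3 x w evx exw wS; have := outS_le e S x; rewrite /outS => o d3; clear -o d3 n10; lia.
- have := outS_le e S a; rewrite /outS => o; clear -o da n10; lia.
Qed.


Lemma sum_card_in (T : finType) (A : {set T}) (P : pred T) :
  \sum_(u in A) nat_of_bool (P u) = #|[set u in A | P u]|.
Proof.
rewrite -sum_card big_mkcond /=; apply: eq_bigr => u _ => /=.
by case: (u \in A).
Qed.

Lemma caseC p n (e : rel 'I_p) v : 10 <= n -> n <= p -> in_Ex (T3 n) e ->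
  (forall x, degree e x <= n - 3) -> degree e v = n - 3 -> False.
Proof.
move=> n10 np Ex dmax dv; have Ex' := Ex; case: Ex' => [[es ei] [nc _]].
have [S0 S0E] : {S0 : {set 'I_p} | S0 = v |: [set y | e v y]} by exists (v |: [set y | e v y]).
have vN : v \notin [set y | e v y] by rewrite inE ei.
have cNv : #|[set y | e v y]| = n - 3 by [].
have cS0 : #|S0| = n - 2 by rewrite S0E cardsU1 vN cNv; clear -n10; lia.
have inS0 : forall y, e v y -> y \in S0 by move=> y evy; rewrite S0E !inE evy orbT.
have vS0 : v \in S0 by rewrite S0E !inE eqxx.
have nb3 : forall u, e v u -> 1 < outS e S0 u -> degree e u <= 3.
  move=> u evu; rewrite /outS => /card_gt1P[w1 [w2 [h1 h2 d12]]].
  move: h1 h2; rewrite !inE => /andP[euw1 w1S] /andP[euw2 w2S].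
  rewrite leqNgt; apply/negP => d4.
  have wv : forall w, w \notin S0 -> w != v.
    by move=> w wS; apply/eqP => E; move: wS; rewrite E vS0.
  have wNv : forall w, w \notin S0 -> ~~ e v w.
    by move=> w wS; apply/negP => /inS0; apply/negP.
  have w1A : w1 \in [set y | e u y] :\ v by rewrite !inE (wv _ w1S) euw1.
  have w2A : w2 \in ([set y | e u y] :\ v) :\ w1 by rewrite !inE (wv _ w2S) euw2 eq_sym d12.
  have : 0 < #|(([set y | e u y] :\ v) :\ w1) :\ w2|.
    have c1 := cardsD1 w1 ([set y | e u y] :\ v); rewrite w1A in c1.
    have c2 := cardsD1 w2 (([set y | e u y] :\ v) :\ w1); rewrite w2A in c2.
    move: d4; rewrite (degD1 es evu) => d4; clear -c1 c2 d4; lia.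
  case/card_gt0P => w3; rewrite !inE => /and4P[w3w2 w3w1 w3v euw3].
  apply: nc; apply: (copy_lemma n10 es ei evu euw1 euw2 euw3); rewrite ?(wv _ w1S) ?(wv _ w2S) //;
    try by rewrite eq_sym.
  apply: (@leq_trans #|[set y | e v y] :\: [set u; w3]|).
    apply: leq_trans (card_setD_ge _ _).
    have := card2_le u w3; rewrite cNv => B.
    apply: (leq_trans _ (leq_sub2l _ B)); clear -n10; lia.
  apply: subset_leq_card; apply/subsetP => x; rewrite !inE.
  case/andP => H evx; rewrite evx andbT; move: H; apply: contra.
  case/orP => [/orP[/orP[->|/eqP xw]|/eqP xw]|->]; rewrite ?orbT //.
    by move: (wNv _ w1S); rewrite -xw evx.
  by move: (wNv _ w2S); rewrite -xw evx.
have subout : forall y u, y \notin S0 -> outS e (y |: S0) u + e u y <= outS e S0 u.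
  move=> y u yS0; rewrite /outS; case euy: (e u y) => /=.
    have yO : y \in [set z | e u z & z \notin S0] by rewrite inE euy yS0.
    rewrite (cardsD1 y [set z | e u z & z \notin S0]) yO addn1 add1n ltnS.
    apply: subset_leq_card; apply/subsetP => z; rewrite !inE negb_or.
    by case/andP => euz /andP[-> ->]; rewrite euz.
  rewrite addn0; apply: subset_leq_card; apply/subsetP => z; rewrite !inE negb_or.
  by case/andP => euz /andP[_ ->]; rewrite euz.
have ubound : forall y u, y \notin S0 -> e v u ->
    degree e u + outS e (y |: S0) u + e u y <= n - 2.
  move=> y u yS0 evu; rewrite -addnA; have so := subout y u yS0.
  have [o2|o1] := leqP 2 (outS e S0 u).
    have d3 := nb3 u evu o2; have o : outS e S0 u <= degree e u := outS_le e S0 u.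
    clear -so o d3 n10; lia.
  have := dmax u; clear -so o1 n10; lia.
have finish : forall y, y \notin S0 ->
    (outS e (y |: S0) y <= 2 \/ (forall u, e v u -> degree e u + outS e (y |: S0) u <= n - 3))
    -> False.
  move=> y yS0 H.
  have [S SE] : {S : {set 'I_p} | S = y |: S0} by exists (y |: S0).
  have cS : #|S| = n - 1 by rewrite SE cardsU1 yS0 cS0; clear -n10; lia.
  have vy : v != y by apply/eqP => E; move: yS0; rewrite -E vS0.
  have evy : ~~ e v y by apply/negP => /inS0; apply/negP.
  pose t x := degree e x + outS e S x.
  apply: (@exchange p n e S n10 Ex); first by rewrite cS.
  have sumS : \sum_(x in S) t x = t y + (t v + \sum_(u in [set z | e v z]) t u).
    by rewrite SE big_setU1 //= S0E big_setU1.
  have tv : t v = n - 3.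
    rewrite /t dv; suff -> : outS e S v = 0 by rewrite addn0.
    rewrite /outS; apply/eqP; rewrite cards_eq0; apply/eqP/setP => z; rewrite !inE.
    by apply/negP => /andP[/inS0 zS0]; rewrite SE inE zS0 orbT.
  have degy : degree e y = \sum_(u in [set z | e v z]) nat_of_bool (e u y) + outS e S y.
    rewrite sum_card_in /degree -(cardsID S [set z | e y z]) /outS; congr (_ + _).
      apply: eq_card => z; rewrite !inE SE !inE S0E !inE.
      have [->|zy] := eqVneq z y; first by rewrite ei andbF.
      have [->|zv] := eqVneq z v; first by rewrite (es y v) (negbTE evy) ei.
      by rewrite /= andbC (es y z).
    by apply: eq_card => z; rewrite !inE andbC.
  have oy : outS e S y <= degree e y := outS_le e S y.
  have ty : t y = degree e y + outS e S y by [].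
  rewrite sumS tv cS ty degy.
  case: H => [b2|nonP].
    have ub : forall u, u \in [set z | e v z] -> t u + e u y <= n - 2.
      by move=> u; rewrite inE /t SE => evu; exact: ubound.
    have := sum_le ub; rewrite big_split /= cNv => Hs.
    move: b2; rewrite -SE => b2.
    move: Hs b2; set A := \sum_(i in _) t i; set B := \sum_(i in _) _; set o := outS e S y.
    move: n10; clearbody A B o; clear -A B o; nia.
  have ub : forall u, u \in [set z | e v z] -> t u <= n - 3.
    by move=> u; rewrite inE /t SE => evu; exact: nonP.
  have := sum_le ub; rewrite cNv => Hs.
  have := dmax y; rewrite degy => dy.
  move: Hs dy oy; set A := \sum_(i in _) t i; set B := \sum_(i in _) _; set o := outS e S y.
  move: n10; clearbody A B o; clear -A B o; nia.
case: (boolP [exists u, [&& e v u, outS e S0 u == 1 & n - 3 <= degree e u]]) =>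
  [/existsP[u0 /and3P[evu0 o1 du0]] | /existsPn nP].
  move: o1; rewrite /outS => /cards1P[y yE].
  have yO : y \in [set z | e u0 z & z \notin S0] by rewrite yE inE.
  move: (yO); rewrite inE => /andP[eu0y yS0].
  apply: (finish y yS0); left.
  rewrite leqNgt; apply/negP; rewrite /outS => /card_gt2P[w1 [w2 [w3 [[h1 h2 h3] [d12 d23 d31]]]]].
  move: h1 h2 h3; rewrite !inE !negb_or => /and3P[eyw1 w1y w1S] /and3P[eyw2 w2y w2S] /and3P[eyw3 w3y w3S].
  have u0S : u0 \in S0 := inS0 _ evu0.
  have wu : forall w, w \notin S0 -> w != u0 by move=> w wS; apply/eqP => E; move: wS; rewrite E u0S.
  have Nu0 : forall z, e u0 z -> z \notin S0 -> z = y.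
    move=> z ez zS; have : z \in [set z | e u0 z & z \notin S0] by rewrite inE ez zS.
    by rewrite yE inE => /eqP.
  apply: nc; apply: (copy_lemma n10 es ei eu0y eyw1 eyw2 eyw3); rewrite ?wu //; try by rewrite eq_sym.
  apply: (@leq_trans #|[set z | e u0 z] :\ y|).
    have c1 := cardsD1 y [set z | e u0 z]; rewrite inE eu0y in c1.
    move: du0; rewrite /degree => du0; clear -c1 du0 n10; lia.
  apply: subset_leq_card; apply/subsetP => z; rewrite !inE => /andP[zy ez]; rewrite ez andbT.
  have zS : z \in S0 by apply/negPn/negP => zS; move: zy; rewrite (Nu0 z ez zS) eqxx.
  apply/negP => /orP[/orP[/orP[/eqP E|/eqP E]|/eqP E]|/eqP E].
  - by move: zy; rewrite E eqxx.
  - by move: w1S; rewrite -E zS.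
  - by move: w2S; rewrite -E zS.
  - by move: w3S; rewrite -E zS.
have [y yS0] : exists y, y \notin S0 by apply: exists_out; rewrite cS0; clear -n10 np; lia.
apply: (finish y yS0); right => u evu.
have := subout y u yS0; have o : outS e S0 u <= degree e u := outS_le e S0 u; have du := dmax u.
have [o2|o1] := leqP 2 (outS e S0 u).
  have d3 := nb3 u evu o2; clear -o d3 n10; lia.
have [o1'|o0] := eqVneq (outS e S0 u) 1.
  have := nP u; rewrite evu o1' eqxx /= -ltnNge => dl; clear -o1' dl n10; lia.
clear -o1 o0 du n10; lia.
Qed.

Unset Implicit Arguments.

Theorem lemma4p1 (p n : nat) (e : rel 'I_p) :
  10 <= n -> n <= p ->
  in_Ex (T3 n) e ->
  connected_graph e ->
  maxdeg e = n - 5 \/ maxdeg e = n - 4.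
Proof.
move=> n10 np Ex conn.
have lo := lower n10 np Ex.
suff hi : maxdeg e <= n - 4 by clear -lo hi n10; lia.
rewrite leqNgt; apply/negP => Hgt.
have p0 : 0 < p by clear -n10 np; lia.
have [v dv] := max_attained e p0.
have dmax := deg_le_max e.
have [d1|d1] := leqP (n - 1) (maxdeg e).
  by apply: (@caseA p n e v n10 Ex); rewrite dv.
have [d2|d2] := eqVneq (maxdeg e) (n - 2).
  by apply: (@caseB p n e v n10 np Ex conn); [move=> x; rewrite -d2 | rewrite dv].
have d3 : maxdeg e = n - 3 by clear -Hgt d1 d2; lia.
by apply: (@caseC p n e v n10 np Ex); [move=> x; rewrite -d3 | rewrite dv].
Qed.
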